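(* Let $G=(V,E)$ with $V=\{v_1,\dots,v_n\}$ be an undirected graph in which every vertex has degree 2 or 3 and which has no cycles of length 3 or 4, and let $\alpha(G)$ be the maximum size of an independent set of $G$. Fix a total order $\pi$ on $V$. Call $v_i$ of type 1 if $\deg(v_i)=3$ and all its neighbors are before it or all are after it in $\pi$; type 2 if $\deg(v_i)=3$ otherwise; type 3 if $\deg(v_i)=2$ and both neighbors are before it or both are after it; type 4 if $\deg(v_i)=2$ otherwise. Construct the DAG $D=(S\uplus I,A)$: create a set $T\subseteq S$ of 4 vertices; for each $i$ create an internal vertex $u_i\in I$ and sets $I_i,O_i\subseteq S$ of 4 vertices each; add all arcs from $I_i$ to $\{u_i\}\cup T$ and all arcs from $u_i$ to $O_i\cup T$; add exactly $14,16,11,12$ arcs (arbitrary ones) from $I_i$ to $O_i$ when $v_i$ has type $1,2,3,4$ respectively; and for each edge $\{v_i,v_j\}\in E$ with $v_i$ before $v_j$ in $\pi$ add the arc $(u_i,u_j)$. Let $m'=|A|$. Then for every integer $k\ge0$, $G$ has an independent set of size at least $k$ if and only if there is an elimination sequence $\sigma$ of vertices of $I$ such that $D_\sigma$ has at most $m'-k$ arcs. Equivalently, the minimum number of arcs of $D_\sigma$ over all elimination sequences $\sigma$ equals $m'-\alpha(G)$.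
   Context: Eliminating a vertex $v$ of a DAG produces the DAG obtained by deleting $v$ and adding every arc $(x,y)$ with $x$ an in-neighbor and $y$ an out-neighbor of $v$ that is not already present. An elimination sequence is a sequence of distinct internal vertices (of any length), and $D_\sigma$ is the result of eliminating them in order. An independent set is a vertex set containing no edge of $G$. *)

(* Defs.v *)
From mathcomp Require Import all_boot.
Set Implicit Arguments. Unset Strict Implicit. Unset Printing Implicit Defensive.

(* Graph G: finite vertex type V with a symmetric,
   irreflexive edge relation e.  Total order pi on V: an injective
   ranking pi : V -> nat, "x before y" means pi x < pi y. *)

Section Defs.
Variable V : finType.
Variable e : rel V.
Variable pi : V -> nat.

Definition deg (v : V) : nat := #|[set w | e v w]|.

Definition independent (A : {set V}) : bool :=
  [forall x in A, forall y in A, ~~ e x y].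

Definition no_triangle : Prop :=
  forall a b c : V, e a b -> e b c -> e c a -> False.

Definition no_4cycle : Prop :=
  forall a b c d : V, a != c -> b != d ->
    e a b -> e b c -> e c d -> e d a -> False.

Definition all_nbrs_before (v : V) : bool := [forall w, e v w ==> (pi w < pi v)].
Definition all_nbrs_after (v : V) : bool := [forall w, e v w ==> (pi v < pi w)].
Definition one_sided (v : V) : bool := all_nbrs_before v || all_nbrs_after v.

(* number of arcs from I_i to O_i: 14,16,11,12 for types 1,2,3,4 *)
Definition gadget_count (v : V) : nat :=
  if deg v == 3 then (if one_sided v then 14 else 16)
  else (if one_sided v then 11 else 12).

Definition DV : finType := (('I_4 + V) + ((V * 'I_4) + (V * 'I_4)))%type.
Definition vT (i : 'I_4) : DV := inl (inl i).
Definition vU (v : V) : DV := inl (inr v).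
Definition vI (v : V) (i : 'I_4) : DV := inr (inl (v, i)).
Definition vO (v : V) (i : 'I_4) : DV := inr (inr (v, i)).

Definition internal (x : DV) : bool :=
  match x with inl (inr _) => true | _ => false end.

(* X v = the chosen arcs from I_v to O_v (as pairs of indices) *)
Definition arcD (X : V -> {set 'I_4 * 'I_4}) (x y : DV) : bool :=
  match x, y with
  | inr (inl (v, _)), inl (inr w) => v == w           (* I_v -> u_v *)
  | inr (inl _), inl (inl _) => true                  (* I_v -> T *)
  | inl (inr v), inr (inr (w, _)) => v == w           (* u_v -> O_v *)
  | inl (inr _), inl (inl _) => true                  (* u_v -> T *)
  | inr (inl (v, i)), inr (inr (w, j)) => (v == w) && ((i, j) \in X v)
  | inl (inr v), inl (inr w) => e v w && (pi v < pi w) (* u_v -> u_w *)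
  | _, _ => false
  end.

Definition arcsD (X : V -> {set 'I_4 * 'I_4}) : {set DV * DV} :=
  [set a | arcD X a.1 a.2].

End Defs.

(* A digraph is represented by its arc set (only arcs are counted). *)
Section Elim.
Variable N : finType.

Definition eliminate (A : {set N * N}) (v : N) : {set N * N} :=
  [set a in A | (a.1 != v) && (a.2 != v)] :|:
  [set a : N * N | ((a.1, v) \in A) && ((v, a.2) \in A)].

Definition elim_seq (A : {set N * N}) (s : seq N) : {set N * N} :=
  foldl eliminate A s.
End Elim.

(* Main.v *)
Require Import Defs.
From mathcomp Require Import all_boot zify.
Set Implicit Arguments. Unset Strict Implicit. Unset Printing Implicit Defensive.

Lemma walk_elim (N : finType) (A : {set N * N}) (s : seq N) :
  uniq s -> forall q x y, x \notin s -> y \notin s -> all (mem s) q -> uniq q ->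
  path (fun a b => (a, b) \in A) x (rcons q y) -> (x, y) \in elim_seq A s.
Proof.
elim/last_ind: s => [|s v IH] us q x y xs ys qs uq p.
  case: q qs uq p => [|z q] //= _ _; by rewrite andbT.
move: us; rewrite rcons_uniq => /andP[vs us].
rewrite /elim_seq foldl_rcons -/(elim_seq A s) /eliminate !inE /=.
move: xs ys; rewrite !mem_rcons !inE !negb_or => /andP[xv xs] /andP[yv ys].
have sub : forall r, v \notin r -> all (mem (rcons s v)) r -> all (mem s) r.
  move=> r vr /allP rs; apply/allP => z zr; move: (rs z zr); rewrite /= mem_rcons inE.
  by case/orP => // /eqP zv; rewrite -zv zr in vr.
have [vq|vq] := boolP (v \in q).
  case/splitPr: vq uq qs p => q1 q2.
  rewrite cat_uniq => /and3P[uq1 /hasPn hq uq2].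
  have vq1 : v \notin q1 by apply: (hq v); rewrite inE eqxx.
  move: uq2 => /= /andP[vq2 uq2].
  rewrite all_cat /= => /and3P[a1 _ a2].
  rewrite rcons_cat -cat_rcons cat_path last_rcons => /andP[p1 p2].
  apply/orP; right; apply/andP; split.
    by apply: (IH us q1) => //; apply: sub.
  by apply: (IH us q2) => //; apply: sub.
apply/orP; left; rewrite xv yv andbT /=.
rewrite andbT; by apply: (IH us q) => //; apply: sub.
Qed.
Definition target (N : finType) (A : {set N * N}) (s : seq N) : {set N * N} :=
  [set p | [&& p \in A, p.1 \notin s & p.2 \notin s] ||
           [exists z, [&& z \in s, (p.1, z) \in A & (z, p.2) \in A]]].

Lemma elim_target (N : finType) (A : {set N * N}) (s : seq N) :
  {in s &, forall z w, (z, w) \notin A} -> elim_seq A s \subset target A s.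
Proof.
elim/last_ind: s => [|s v IH] H.
  apply/subsetP => p pA; by rewrite inE pA.
have H' : {in s &, forall z w, (z, w) \notin A}.
  by move=> z w zs ws; apply: H; rewrite mem_rcons inE ?zs ?ws orbT.
have vs : v \in rcons s v by rewrite mem_rcons inE eqxx.
have sr : forall z, z \in s -> z \in rcons s v.
  by move=> z zs; rewrite mem_rcons inE zs orbT.
have IH' := subsetP (IH H').
rewrite /elim_seq foldl_rcons -/(elim_seq A s) /eliminate.
apply/subsetP => [[a b]]; rewrite !inE /= => /orP[/andP[/IH' + /andP[av bv]]|/andP[/IH' h1 /IH' h2]].
  rewrite inE /= => /orP[/and3P[-> ab bb]|/existsP[z /and3P[zs h1 h2]]].
    by rewrite !mem_rcons !inE negb_or av ab negb_or bv bb.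
  apply/orP; right; apply/existsP; exists z; by rewrite h1 h2 sr.
move: h1 h2; rewrite !inE /=.
case/orP=> [/and3P[h1 _ _]|/existsP[z /and3P[zs _ zv]]]; last first.
  by move: (H z v (sr z zs) vs); rewrite zv.
case/orP=> [/and3P[h2 _ _]|/existsP[z /and3P[zs vz _]]]; last first.
  by move: (H v z vs (sr z zs)); rewrite vz.
apply/orP; right; apply/existsP; exists v; by rewrite vs h1 h2.
Qed.
Definition inN (V : finType) (e : rel V) (pi : V -> nat) (v : V) : {set V} :=
  [set a | e v a && (pi a < pi v)].
Definition outN (V : finType) (e : rel V) (pi : V -> nat) (v : V) : {set V} :=
  [set b | e v b && (pi v < pi b)].

Lemma card_sum_nat (T : finType) (P : pred T) : #|[set x | P x]| = \sum_x (P x : nat).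
Proof.
rewrite -sum1_card big_mkcond /=; apply: eq_bigr => x _; rewrite inE; by case: (P x).
Qed.

Lemma card_sumT (T1 T2 : finType) (P : pred (T1 + T2)) :
  #|[set x | P x]| = #|[set a | P (inl a)]| + #|[set b | P (inr b)]|.
Proof. by rewrite !card_sum_nat big_sumType. Qed.

Lemma card_pairT (T1 T2 : finType) (P : T1 -> T2 -> bool) :
  #|[set p : T1 * T2 | P p.1 p.2]| = \sum_x #|[set y | P x y]|.
Proof.
rewrite card_sum_nat -(pair_bigA _ (fun x y => nat_of_bool (P x y))) /=; apply: eq_bigr => x _; by rewrite card_sum_nat.
Qed.

Lemma card_lo : #|[set i : 'I_4 | i < 2]| = 2.
Proof. by rewrite card_sum_nat !big_ord_recr big_ord0. Qed.
Lemma card_hi : #|[set i : 'I_4 | 2 <= i]| = 2.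
Proof. by rewrite card_sum_nat !big_ord_recr big_ord0. Qed.
Lemma nbr_split (V : finType) (e : rel V) (pi : V -> nat)
  (eirr : irreflexive e) (hpi : injective pi) v w :
  e v w -> (pi w < pi v) || (pi v < pi w).
Proof.
move=> evw; case: (ltngtP (pi w) (pi v)) => // /hpi wv.
by rewrite wv eirr in evw.
Qed.

Lemma deg_split (V : finType) (e : rel V) (pi : V -> nat)
  (eirr : irreflexive e) (hpi : injective pi) v :
  deg e v = #|inN e pi v| + #|outN e pi v|.
Proof.
rewrite /deg.
have -> : [set w | e v w] = inN e pi v :|: outN e pi v.
  apply/setP => w; rewrite !inE -andb_orr.
  by case evw: (e v w) => //=; rewrite (nbr_split eirr hpi evw).
rewrite cardsU; suff -> : inN e pi v :&: outN e pi v = set0 by rewrite cards0 subn0.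
apply/setP => w; rewrite !inE; apply/negP => /andP[/andP[_ h1] /andP[_ h2]].
by move: (ltn_trans h1 h2); rewrite ltnn.
Qed.

Lemma before_card (V : finType) (e : rel V) (pi : V -> nat)
  (eirr : irreflexive e) (hpi : injective pi) v :
  all_nbrs_before e pi v = (#|outN e pi v| == 0).
Proof.
rewrite cards_eq0; apply/forallP/eqP => [h|h w].
  apply/setP => w; rewrite !inE; apply/negP => /andP[evw lt].
  by move: (h w); rewrite evw /= => /(ltn_trans lt); rewrite ltnn.
apply/implyP => evw; move/setP: h => /(_ w); rewrite !inE evw /= => h.
by move: (nbr_split eirr hpi evw); rewrite h orbF.
Qed.

Lemma after_card (V : finType) (e : rel V) (pi : V -> nat)
  (eirr : irreflexive e) (hpi : injective pi) v :
  all_nbrs_after e pi v = (#|inN e pi v| == 0).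
Proof.
rewrite cards_eq0; apply/forallP/eqP => [h|h w].
  apply/setP => w; rewrite !inE; apply/negP => /andP[evw lt].
  by move: (h w); rewrite evw /= => /(ltn_trans lt); rewrite ltnn.
apply/implyP => evw; move/setP: h => /(_ w); rewrite !inE evw /= => h.
by move: (nbr_split eirr hpi evw); rewrite h.
Qed.

Lemma gadget_formula (V : finType) (e : rel V) (pi : V -> nat)
  (eirr : irreflexive e) (hpi : injective pi) 
  (hdeg : forall v, deg e v = 2 \/ deg e v = 3) v :
  gadget_count e pi v = 5 + 3 * (#|inN e pi v| + #|outN e pi v|) + #|inN e pi v| * #|outN e pi v|
  /\ (#|inN e pi v| + #|outN e pi v| = 2 \/ #|inN e pi v| + #|outN e pi v| = 3).
Proof.
rewrite /gadget_count /one_sided before_card // after_card //.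
have := hdeg v; rewrite (deg_split (pi:=pi)) //.
move: #|inN e pi v| #|outN e pi v| => i o.
case=> h; rewrite h; (split; [|by [left|right]]);
  by case: i o h => [|[|[|[|i]]]] [|[|[|[|o]]]].
Qed.
Definition Idx (V : finType) : finType :=
  ((('I_4 * 'I_4 + 'I_4 * V) + (V * 'I_4 + V * V)) + ('I_4 * (V * 'I_4) + (V * 'I_4) * 'I_4))%type.

Definition Fm (V : finType) (p : V * Idx V) : DV V * DV V :=
  let v := p.1 in
  match p.2 with
  | inl (inl (inl (i, j))) => (vI v i, vO v j)
  | inl (inl (inr (i, w))) => (vI v i, vU w)
  | inl (inr (inl (a, j))) => (vU a, vO v j)
  | inl (inr (inr (a, b))) => (vU a, vU b)
  | inr (inl (i, (w, j))) => (vI v i, vO w j)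
  | inr (inr ((a, i), j)) => (vI a i, vO v j)
  end.

Definition validF (V : finType) (e : rel V) (pi : V -> nat) (X : V -> {set 'I_4 * 'I_4})
  (v : V) (idx : Idx V) : bool :=
  match idx with
  | inl (inl (inl ij)) => ij \notin X v
  | inl (inl (inr iw)) => iw.2 \in outN e pi v
  | inl (inr (inl aj)) => aj.1 \in inN e pi v
  | inl (inr (inr ab)) => (ab.1 \in inN e pi v) && (ab.2 \in outN e pi v)
  | inr _ => false
  end.

Definition validB (V : finType) (e : rel V) (pi : V -> nat) (X : V -> {set 'I_4 * 'I_4})
  (S : {set V}) (v : V) (idx : Idx V) : bool :=
  match idx with
  | inl (inl (inl ij)) => ij \notin X v
  | inl (inl (inr iw)) => iw.2 \in outN e pi v :\: S
  | inl (inr (inl aj)) => aj.1 \in inN e pi v :\: S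
  | inl (inr (inr ab)) => (ab.1 \in inN e pi v :\: S) && (ab.2 \in outN e pi v :\: S)
  | inr (inl iwj) => (iwj.1 < 2) && (iwj.2.1 \in outN e pi v :&: S)
  | inr (inr aij) => (2 <= aij.1.2) && (aij.1.1 \in inN e pi v :&: S)
  end.

Lemma c0 (T : finType) : #|[set _ : T | false]| = 0.
Proof. by apply/eqP; rewrite cards_eq0; apply/eqP/setP => x; rewrite !inE. Qed.

Lemma card_I4 : #|{: 'I_4}| = 4. Proof. by rewrite card_ord. Qed.

Lemma cardX_T1 (T1 T2 : finType) (B : {set T2}) :
  #|[set p : T1 * T2 | p.2 \in B]| = #|T1| * #|B|.
Proof.
rewrite -cardsT -cardsX; apply: eq_card => -[x y]; by rewrite !inE.
Qed.
Lemma cardX_T2 (T1 T2 : finType) (B : {set T1}) :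
  #|[set p : T1 * T2 | p.1 \in B]| = #|B| * #|T2|.
Proof.
rewrite -cardsT -cardsX; apply: eq_card => -[x y]; by rewrite !inE andbT.
Qed.
Lemma cardX_2 (T1 T2 : finType) (A : {set T1}) (B : {set T2}) :
  #|[set p : T1 * T2 | (p.1 \in A) && (p.2 \in B)]| = #|A| * #|B|.
Proof.
rewrite -cardsX; apply: eq_card => -[x y]; by rewrite !inE.
Qed.

Lemma fiberF_card (V : finType) (e : rel V) (pi : V -> nat) X v :
  #|[set idx | validF e pi X v idx]| =
    (16 - #|X v|) + #|outN e pi v| * 4 + #|inN e pi v| * 4 + #|inN e pi v| * #|outN e pi v|.
Proof.
rewrite !card_sumT /= !c0.
rewrite cardX_T1 cardX_T2 cardX_2 !card_ord.
have -> : #|[set a : 'I_4 * 'I_4 | a \notin X v]| = 16 - #|X v|.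
  move: (cardsC (X v)); rewrite card_prod !card_ord (_ : 4 * 4 = 16) // => <-.
  by rewrite addKn; apply: eq_card => x; rewrite !inE.
set c := 16 - #|X v|; move: (#|inN e pi v| * #|outN e pi v|) => m; lia.
Qed.

Lemma fiberB_card (V : finType) (e : rel V) (pi : V -> nat) X S v :
  #|[set idx | validB e pi X S v idx]| =
    (16 - #|X v|) + #|outN e pi v :\: S| * 4 + #|inN e pi v :\: S| * 4
    + #|inN e pi v :\: S| * #|outN e pi v :\: S|
    + 2 * (#|outN e pi v :&: S| * 4) + (#|inN e pi v :&: S| * 2) * 4.
Proof.
rewrite !card_sumT /= cardX_T1 cardX_T2 cardX_2 !card_ord.
have -> : #|[set a : 'I_4 * 'I_4 | a \notin X v]| = 16 - #|X v|.
  move: (cardsC (X v)); rewrite card_prod !card_ord (_ : 4 * 4 = 16) // => <-.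
  by rewrite addKn; apply: eq_card => x; rewrite !inE.
have -> : #|[set x : 'I_4 * (V * 'I_4) | (x.1 < 2) && (x.2.1 \in outN e pi v :&: S)]|
   = 2 * (#|outN e pi v :&: S| * 4).
  rewrite (_ : [set x : 'I_4 * (V * 'I_4) | _] = setX [set i : 'I_4 | i < 2] (setX (outN e pi v :&: S) [set: 'I_4])).
    by rewrite !cardsX card_lo cardsT card_ord.
  by apply/setP => -[i [w j]]; rewrite !inE andbT.
have -> : #|[set x : (V * 'I_4) * 'I_4 | (2 <= x.1.2) && (x.1.1 \in inN e pi v :&: S)]|
   = (#|inN e pi v :&: S| * 2) * 4.
  rewrite (_ : [set x : (V * 'I_4) * 'I_4 | _] = setX (setX (inN e pi v :&: S) [set i : 'I_4 | 2 <= i]) [set: 'I_4]).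
    by rewrite !cardsX card_hi cardsT card_ord.
  by apply/setP => -[[w i] j]; rewrite !inE andbT andbC.
set c := 16 - #|X v|; set a1 := #|inN e pi v :\: S|; set a2 := #|outN e pi v :\: S|; set a3 := #|inN e pi v :&: S|; set a4 := #|outN e pi v :&: S|; nia.
Qed.

Definition Idx2 (V : finType) : finType := (('I_4 + V) + (('I_4 + 'I_4) + V))%type.

Definition Gm (V : finType) (p : V * Idx2 V) : DV V * DV V :=
  let v := p.1 in
  match p.2 with
  | inl (inl i) => (vI v i, vU v)
  | inl (inr a) => (vU a, vU v)
  | inr (inl (inl j)) => (vU v, vO v j)
  | inr (inl (inr t)) => (vU v, vT V t)
  | inr (inr b) => (vU v, vU b)
  end.

Definition valid2 (V : finType) (e : rel V) (pi : V -> nat) (v : V) (idx : Idx2 V) : bool :=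
  match idx with
  | inl (inr a) => a \in inN e pi v
  | inr (inr b) => b \in outN e pi v
  | _ => true
  end.

Lemma fiber2_card (V : finType) (e : rel V) (pi : V -> nat) v :
  #|[set idx | valid2 e pi v idx]| = 12 + #|inN e pi v| + #|outN e pi v|.
Proof.
rewrite !card_sumT /=.
have c1 : forall T : finType, #|[set _ : T | true]| = #|T|.
  by move=> T; rewrite -cardsT; apply: eq_card => x; rewrite !inE.
rewrite !c1 !card_ord.
have cA : forall (A : {set V}), #|[set x | x \in A]| = #|A|.
  by move=> A; apply: eq_card => x; rewrite !inE.
rewrite !cA; lia.
Qed.

Lemma card_fibers (V : finType) (I : finType) (S : {set V}) (P : V -> I -> bool) :
  #|[set p : V * I | (p.1 \in S) && P p.1 p.2]| =
  \sum_v (if v \in S then #|[set i | P v i]| else 0).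
Proof.
rewrite (card_pairT (fun v i => (v \in S) && P v i)); apply: eq_bigr => v _; case: (v \in S) => //.
by apply/eqP; rewrite cards_eq0; apply/eqP/setP => x; rewrite !inE.
Qed.

Definition Pn (N : finType) (s : seq N) : {set N * N} := [set p | (p.1 \notin s) && (p.2 \notin s)].
Definition sset (V : finType) (s : seq (DV V)) : {set V} := [set v | vU v \in s].

Lemma all_int (V : finType) (s : seq (DV V)) (x : DV V) :
  all (@internal V) s -> x \in s -> exists v, x = vU v /\ v \in sset s.
Proof.
move=> /allP ai xs; move: (ai x xs).
case: x xs => [[t|w]|[[w i]|[w i]]] //= xs _; exists w; by rewrite inE.
Qed.

Lemma target_sub (V : finType) (e : rel V) (pi : V -> nat) X (s : seq (DV V)) :
  symmetric e ->
  all (@internal V) s ->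
  {in s &, forall z w, (z, w) \notin arcsD e pi X} ->
  target (arcsD e pi X) s \subset
    (arcsD e pi X :&: Pn s) :|: (@Fm V @: [set p | (p.1 \in sset s) && validF e pi X p.1 p.2]).
Proof.
move=> esym ai H; apply/subsetP => p; rewrite !inE => /orP[/and3P[-> -> ->] //|].
case/existsP => z /and3P[zs h1 h2].
case pA: (p \in arcsD e pi X).
  move: (pA); rewrite inE => ->; apply/orP; left; rewrite /=; apply/andP; split; apply/negP => ps.
    by move: (H _ _ ps zs); rewrite h1.
  by move: (H _ _ zs ps); rewrite h2.
apply/orP; right.
have [v [zv vS]] := all_int ai zs; subst z.
case: p pA h1 h2 => x y /=; rewrite !inE /=.
case: x => [[t|w]|[[w i]|[w i]]]; case: y => [[t'|w']|[[w' j]|[w' j]]] //=.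
- move=> _ /andP[ewv lt1] /andP[evw lt2]; apply/imsetP; exists (v, inl (inr (inr (w, w')))) => //.
  by rewrite !inE /= zs /inN /outN !inE esym ewv lt1 evw lt2.
- move=> _ /andP[ewv lt1] /eqP <-; apply/imsetP; exists (v, inl (inr (inl (w, j)))) => //.
  by rewrite !inE /= zs /inN !inE esym ewv lt1.
- move=> _ /eqP -> /andP[evw lt2]; apply/imsetP; exists (v, inl (inl (inr (i, w')))) => //.
  by rewrite !inE /= zs /outN !inE evw lt2.
- move=> h /eqP wv /eqP vw; subst; apply/imsetP; exists (w', inl (inl (inl (i, j)))) => //.
  by rewrite !inE /= zs /=; rewrite eqxx /= in h; rewrite h.
Qed.

Definition GI2 (V : finType) (e : rel V) (pi : V -> nat) (S : {set V}) :=
  [set p : V * Idx2 V | (p.1 \in S) && valid2 e pi p.1 p.2].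

Lemma G_sub (V : finType) (e : rel V) (pi : V -> nat) X (s : seq (DV V)) :
  symmetric e ->
  @Gm V @: GI2 e pi (sset s) \subset arcsD e pi X :\: Pn s.
Proof.
move=> esym; apply/subsetP => p /imsetP[[v idx] + ->]; rewrite !inE /= => /andP[vs].
case: idx => [[i|a]|[[j|t]|b]] /=; rewrite vs /= ?andbF ?eqxx //.
- by rewrite /inN inE => /andP[eva ->]; rewrite esym eva.
- by rewrite /outN inE => /andP[-> ->].
Qed.

Lemma G_inj (V : finType) (e : rel V) (pi : V -> nat) X (s : seq (DV V)) :
  symmetric e -> {in s &, forall z w, (z, w) \notin arcsD e pi X} ->
  {in GI2 e pi (sset s) &, injective (@Gm V)}.
Proof.
move=> esym H [v idx] [v' idx']; rewrite !inE /= => /andP[vs h] /andP[vs' h'].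
case: idx h => [[i|a]|[[j|t]|b]]; case: idx' h' => [[i'|a']|[[j'|t']|b']] //= h' h []. 
all: try by move=> -> ->.
- move=> av vb; subst; move: (H _ _ vs' vs); rewrite inE /=.
  by move: h; rewrite /inN inE esym => /andP[-> ->].
- by move=> -> _ ->.
- move=> va bv; subst; move: (H _ _ vs vs'); rewrite inE /=.
  by move: h; rewrite /outN inE => /andP[-> ->].
Qed.

Lemma G_cover (V : finType) (e : rel V) (pi : V -> nat) X (s : seq (DV V)) :
  symmetric e -> all (@internal V) s ->
  arcsD e pi X :\: Pn s \subset @Gm V @: GI2 e pi (sset s).
Proof.
move=> esym ai; apply/subsetP => -[x y]; rewrite !inE /= negb_and !negbK.
case/andP => /orP[xs|ys] hA.
  have [v [xv vS]] := all_int ai xs; subst x; rewrite inE in vS.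
  case: y hA => [[t|w]|[[w i]|[w i]]] //= hA; apply/imsetP.
  - by exists (v, inr (inl (inr t))); rewrite // !inE vS.
  - by exists (v, inr (inr w)); rewrite // !inE vS /= /outN inE.
  - by move/eqP: hA => <-; exists (v, inr (inl (inl i))); rewrite // !inE vS.
have [v [yv vS]] := all_int ai ys; subst y; rewrite inE in vS.
case: x hA => [[t|w]|[[w i]|[w i]]] //= hA; apply/imsetP.
- by exists (v, inl (inr w)); rewrite // !inE vS /= /inN inE esym.
- by move/eqP: hA => ->; exists (v, inl (inl i)); rewrite // !inE vS.
Qed.

Definition GIb (V : finType) (e : rel V) (pi : V -> nat) X (S : {set V}) :=
  [set p : V * Idx V | (p.1 \in S) && validB e pi X S p.1 p.2].
Definition GIf (V : finType) (e : rel V) (pi : V -> nat) X (S : {set V}) :=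
  [set p : V * Idx V | (p.1 \in S) && validF e pi X p.1 p.2].

Lemma F_inj (V : finType) (e : rel V) (pi : V -> nat) X S :
  symmetric e -> irreflexive e -> no_4cycle e ->
  {in GIb e pi X S &, injective (@Fm V)}.
Proof.
move=> esym eirr h4 [v idx] [v' idx']; rewrite !inE /= => /andP[vs h] /andP[vs' h'].
case: idx h => [[[[i j]|[i w]]|[[a j]|[a b]]]|[[i [w j]]|[[a i] j]]];
case: idx' h' => [[[[i' j']|[i' w']]|[[a' j']|[a' b']]]|[[i' [w' j']]|[[a' i'] j']]] //= h' h [].
all: intros; subst; try done.
all: try by move: h h'; rewrite /inN /outN !inE ?eirr ?andbF.
2,3: by move: h h' => /andP[+ _] /andP[+ _]; lia.
case: (eqVneq v v') => [->//|nv]; exfalso.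
move: h h'; rewrite /inN /outN !inE => /andP[/andP[_ /andP[e1 l1]] /andP[_ /andP[e2 l2]]].
move=> /andP[/andP[_ /andP[e3 l3]] /andP[_ /andP[e4 l4]]].
apply: (h4 a' v b' v') => //.
- apply/negP => /eqP ab; subst; move: (ltn_trans l1 l2); by rewrite ltnn.
- by rewrite esym.
- by rewrite esym.
Qed.

Lemma F_notA (V : finType) (e : rel V) (pi : V -> nat) X S p :
  symmetric e -> irreflexive e -> no_triangle e ->
  p \in GIb e pi X S -> @Fm V p \notin arcsD e pi X.
Proof.
move=> esym eirr h3; case: p => v idx; rewrite !inE /= => /andP[vs].
case: idx => [[[[i j]|[i w]]|[[a j]|[a b]]]|[[i [w j]]|[[a i] j]]] /=;
  rewrite /inN /outN ?inE ?eqxx //=.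
- by move=> /and3P[_ evw _]; apply/negP => /eqP wv; subst; rewrite eirr in evw.
- by move=> /and3P[_ eva _]; apply/negP => /eqP av; subst; rewrite eirr in eva.
- move=> /and4P[/and3P[_ eva _] _ evb _]; apply/negP => /andP[eab _].
  by apply: (h3 a b v) => //; rewrite esym.
- by move=> /and3P[_ /andP[evw _] _]; apply/negP => /andP[/eqP wv _]; subst; rewrite eirr in evw.
- by move=> /and3P[_ /andP[eva _] _]; apply/negP => /andP[/eqP av _]; subst; rewrite eirr in eva.
Qed.

Lemma notin_nonint (V : finType) (s : seq (DV V)) x :
  all (@internal V) s -> ~~ internal x -> x \notin s.
Proof. by move=> /allP ai ni; apply/negP => /ai; rewrite (negbTE ni). Qed.

Lemma F_inB (V : finType) (e : rel V) (pi : V -> nat) X (s : seq (DV V)) p :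
  symmetric e -> irreflexive e -> uniq s -> all (@internal V) s ->
  p \in GIb e pi X (sset s) -> @Fm V p \in elim_seq (arcsD e pi X) s.
Proof.
move=> esym eirr us ai; case: p => v idx; rewrite !inE /= => /andP[vs].
have nI : forall w i, vI w i \notin s by move=> w i; apply: notin_nonint.
have nO : forall w i, vO w i \notin s by move=> w i; apply: notin_nonint.
case: idx => [[[[i j]|[i w]]|[[a j]|[a b]]]|[[i [w j]]|[[a i] j]]] /=;
  rewrite /inN /outN ?inE.
- move=> _; apply: (walk_elim us (q := [:: vU v])) => //=; by rewrite ?vs ?inE /= ?eqxx.
- move=> /and3P[ws evw lt]; apply: (walk_elim us (q := [:: vU v])) => //=;
  by rewrite ?vs ?andbT ?inE /= ?eqxx ?evw ?lt /=.
- move=> /and3P[as_ eva lt]; apply: (walk_elim us (q := [:: vU v])) => //=;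
  by rewrite ?vs ?andbT ?inE /= ?eqxx ?(esym a v) ?eva ?lt /=.
- move=> /and4P[/and3P[as_ eva lt1] bs evb lt2].
  apply: (walk_elim us (q := [:: vU v])) => //=;
  by rewrite ?vs ?andbT ?inE /= ?eqxx ?(esym a v) ?eva ?evb ?lt1 ?lt2 /=.
- move=> /and3P[lt /andP[evw lt2] ws].
  have wv : (vU v == vU w) = false.
    by apply/negP => /eqP [] wv; subst; rewrite eirr in evw.
  apply: (walk_elim us (q := [:: vU v; vU w])) => //=;
  by rewrite ?vs ?ws ?andbT ?inE /= ?wv ?eqxx ?evw ?lt2 /=.
- move=> /and3P[lt /andP[eva lt2] as_].
  have wv : (vU a == vU v) = false.
    by apply/negP => /eqP [] wv; subst; rewrite eirr in eva.
  apply: (walk_elim us (q := [:: vU a; vU v])) => //=;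
  by rewrite ?vs ?as_ ?andbT ?inE /= ?wv ?eqxx ?(esym a v) ?eva ?lt2 /=.
Qed.

Lemma Aout_inB (V : finType) (e : rel V) (pi : V -> nat) X (s : seq (DV V)) :
  uniq s -> arcsD e pi X :&: Pn s \subset elim_seq (arcsD e pi X) s.
Proof.
move=> us; apply/subsetP => -[x y]; rewrite !inE /= => /andP[hA /andP[xs ys]].
by apply: (walk_elim us (q := [::])) => //=; rewrite inE hA.
Qed.

Unset Implicit Arguments.
Lemma arithB iN iS oN oS c :
  (iN+iS)+(oN+oS) = 2 \/ (iN+iS)+(oN+oS) = 3 ->
  c = 5 + 3*((iN+iS)+(oN+oS)) + (iN+iS)*(oN+oS) ->
  12 + (iN+iS) + (oN+oS) <= (16 - c) + oN*4 + iN*4 + iN*oN + 2*(oS*4) + (iS*2)*4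
     + ((iS == 0) && (oS == 0)).
Proof.
move=> h ->.
have : iN <= 3 /\ iS <= 3 /\ oN <= 3 /\ oS <= 3 by lia.
case=> /leP a [/leP b [/leP c' /leP d]].
move: h; case: iN a => [|[|[|[|x]]]] a; try (exfalso; lia);
case: iS b => [|[|[|[|x']]]] b; try (exfalso; lia);
case: oN c' => [|[|[|[|y]]]] c'; try (exfalso; lia);
case: oS d => [|[|[|[|y']]]] d; try (exfalso; lia); by case.
Qed.
Lemma arithF i o c :
  i + o = 2 \/ i + o = 3 -> c = 5 + 3*(i+o) + i*o ->
  (16 - c) + o*4 + i*4 + i*o + 1 <= 12 + i + o.
Proof.
move=> h ->.
have : i <= 3 /\ o <= 3 by lia.
case=> /leP a /leP b.
move: h; case: i a => [|[|[|[|x]]]] a; try (exfalso; lia);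
case: o b => [|[|[|[|y]]]] b; try (exfalso; lia); by case.
Qed.
Set Implicit Arguments.

Lemma card_sumS (V : finType) (S : {set V}) : #|S| = \sum_v (v \in S : nat).
Proof.
rewrite -card_sum_nat; apply: eq_card => v; by rewrite inE.
Qed.

Lemma sum_GIf (V : finType) (e : rel V) (pi : V -> nat) X S :
  #|GIf e pi X S| = \sum_v (if v \in S then
    (16 - #|X v|) + #|outN e pi v| * 4 + #|inN e pi v| * 4 + #|inN e pi v| * #|outN e pi v| else 0).
Proof.
rewrite /GIf (card_fibers S (validF e pi X)); apply: eq_bigr => v _.
by rewrite fiberF_card.
Qed.

Lemma sum_GIb (V : finType) (e : rel V) (pi : V -> nat) X S :
  #|GIb e pi X S| = \sum_v (if v \in S then
    (16 - #|X v|) + #|outN e pi v :\: S| * 4 + #|inN e pi v :\: S| * 4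
    + #|inN e pi v :\: S| * #|outN e pi v :\: S|
    + 2 * (#|outN e pi v :&: S| * 4) + (#|inN e pi v :&: S| * 2) * 4 else 0).
Proof.
rewrite /GIb (card_fibers S (validB e pi X S)); apply: eq_bigr => v _.
by rewrite fiberB_card.
Qed.

Lemma sum_GI2 (V : finType) (e : rel V) (pi : V -> nat) S :
  #|GI2 e pi S| = \sum_v (if v \in S then 12 + #|inN e pi v| + #|outN e pi v| else 0).
Proof.
rewrite /GI2 (card_fibers S (valid2 e pi)); apply: eq_bigr => v _.
by rewrite fiber2_card.
Qed.

Lemma forward (V : finType) (e : rel V) (pi : V -> nat)
  (esym : symmetric e) (eirr : irreflexive e)
  (hdeg : forall v, deg e v = 2 \/ deg e v = 3)
  (hpi : injective pi)
  (X : V -> {set 'I_4 * 'I_4})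
  (hX : forall v, #|X v| = gadget_count e pi v) (Ind : {set V}) :
  independent e Ind ->
  exists s : seq (DV V),
    [/\ uniq s, all (@internal V) s &
        #|elim_seq (arcsD e pi X) s| + #|Ind| <= #|arcsD e pi X|].
Proof.
move=> hI.
have vinj : injective (@vU V) by move=> a b [].
set s := [seq vU v | v <- enum Ind].
have us : uniq s by rewrite map_inj_uniq // enum_uniq.
have ai : all (@internal V) s by apply/allP => x /mapP[v _ ->].
have sS : sset s = Ind by apply/setP => v; rewrite inE mem_map // mem_enum.
have H : {in s &, forall z w, (z, w) \notin arcsD e pi X}.
  move=> z w /mapP[a aI ->] /mapP[b bI ->]; rewrite inE /=.
  rewrite mem_enum in aI; rewrite mem_enum in bI.
  by move/forall_inP: hI => /(_ a aI) /forall_inP /(_ b bI) /negbTE ->.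
exists s; split => //.
set A := arcsD e pi X.
have hB : #|elim_seq A s| <= #|A :&: Pn s| + #|GIf e pi X (sset s)|.
  have sub := subset_trans (elim_target H) (target_sub esym ai H).
  apply: leq_trans (subset_leq_card sub) _.
  apply: leq_trans (leq_card_setU _ _) _; rewrite leq_add2l; exact: leq_imset_card.
have hA := cardsID (Pn s) A.
have hG : #|GI2 e pi (sset s)| <= #|A :\: Pn s|.
  rewrite -(card_in_imset (G_inj esym H)). exact: subset_leq_card (G_sub pi X s esym).
have hsum : #|GIf e pi X (sset s)| + #|sset s| <= #|GI2 e pi (sset s)|.
  rewrite sum_GIf sum_GI2 card_sumS -big_split; apply: leq_sum => v _.
  case: (v \in sset s) => //=.
  have [hg hd] := gadget_formula eirr hpi hdeg v.
  rewrite hX; have := arithF _ _ _ hd hg; by [].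
rewrite -sS; lia.
Qed.

Lemma backward (V : finType) (e : rel V) (pi : V -> nat)
  (esym : symmetric e) (eirr : irreflexive e)
  (hdeg : forall v, deg e v = 2 \/ deg e v = 3)
  (h3 : no_triangle e) (h4 : no_4cycle e)
  (hpi : injective pi)
  (X : V -> {set 'I_4 * 'I_4})
  (hX : forall v, #|X v| = gadget_count e pi v) (s : seq (DV V)) :
  uniq s -> all (@internal V) s ->
  exists J : {set V}, independent e J /\
     #|arcsD e pi X| <= #|elim_seq (arcsD e pi X) s| + #|J|.
Proof.
move=> us ai.
set S := sset s.
set J := [set v in S | (#|inN e pi v :&: S| == 0) && (#|outN e pi v :&: S| == 0)].
exists J; split.
  apply/forall_inP => x; rewrite inE => /andP[xS /andP[c1 c2]].
  apply/forall_inP => y; rewrite inE => /andP[yS _].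
  apply/negP => exy.
  case/orP: (nbr_split eirr hpi exy) => lt.
    move: c1; rewrite cards_eq0 => /eqP/setP/(_ y); rewrite !inE exy lt /=; by move: yS; rewrite inE => ->.
  move: c2; rewrite cards_eq0 => /eqP/setP/(_ y); rewrite !inE exy lt /=; by move: yS; rewrite inE => ->.
set A := arcsD e pi X.
have hB : #|A :&: Pn s| + #|GIb e pi X S| <= #|elim_seq A s|.
  rewrite -(card_in_imset (@F_inj V e pi X S esym eirr h4)).
  have -> : #|A :&: Pn s| + #|@Fm V @: GIb e pi X S| = #|(A :&: Pn s) :|: @Fm V @: GIb e pi X S|.
    rewrite cardsU; suff -> : (A :&: Pn s) :&: (@Fm V @: GIb e pi X S) = set0 by rewrite cards0 subn0.
    apply/setP => p; rewrite !inE; apply/negP => /andP[/andP[pA _] /imsetP[q qG pq]].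
    by move: (F_notA esym eirr h3 qG); rewrite -pq inE pA.
  apply: subset_leq_card; rewrite subUset Aout_inB //=.
  by apply/subsetP => p /imsetP[q qG ->]; apply: F_inB.
have hA := cardsID (Pn s) A.
have hG : #|A :\: Pn s| <= #|GI2 e pi S|.
  apply: leq_trans (subset_leq_card (G_cover pi X esym ai)) _; exact: leq_imset_card.
have hsum : #|GI2 e pi S| <= #|GIb e pi X S| + #|J|.
  rewrite sum_GIb sum_GI2 card_sumS -big_split; apply: leq_sum => v _.
  case vS: (v \in S) => //=.
  rewrite /J inE vS /=.
  have [hg hd] := gadget_formula eirr hpi hdeg v.
  have ci := cardsID S (inN e pi v); have co := cardsID S (outN e pi v).
  rewrite -ci -co in hg hd; rewrite hX hg -ci -co.
  move: hd ci co hg.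
  set a := #|inN e pi v :\: S|; set b := #|inN e pi v :&: S|.
  set c := #|outN e pi v :\: S|; set d := #|outN e pi v :&: S|.
  move=> hd _ _ _.
  have hd' : (a + b) + (c + d) = 2 \/ (a + b) + (c + d) = 3 by lia.
  have := arithB a b c d (5 + 3 * (b + a + (d + c)) + (b + a) * (d + c)) hd'.
  rewrite [b + a]addnC [d + c]addnC => /(_ erefl).
  move=> h; apply: (leq_trans _ h); lia.
lia.
Qed.

Theorem mainTheorem6 (V : finType) (e : rel V) (pi : V -> nat)
  (esym : symmetric e) (eirr : irreflexive e)
  (hdeg : forall v, deg e v = 2 \/ deg e v = 3)
  (h3 : no_triangle e) (h4 : no_4cycle e)
  (hpi : injective pi)
  (X : V -> {set 'I_4 * 'I_4})
  (hX : forall v, #|X v| = gadget_count e pi v) :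
  forall k : nat,
    (exists A : {set V}, independent e A /\ k <= #|A|) <->
    (exists s : seq (DV V),
        [/\ uniq s, all (@internal V) s &
            #|elim_seq (arcsD e pi X) s| + k <= #|arcsD e pi X|]).
Proof.
move=> k; split.
  case=> Ind [hI hk].
  have [s [us ai hs]] := forward esym eirr hdeg hpi hX hI.
  exists s; split => //; lia.
case=> s [us ai hs].
have [J [hJ hJc]] := backward esym eirr hdeg h3 h4 hpi hX us ai.
exists J; split => //; lia.
Qed.
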